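(* Let $\Phi=(V,\mathcal C)$ be a $(k,d,s)$-CNF formula and $c^*$ a clause with $|\mathrm{vbl}(c^* )|=k$. Let $p\ge1$ satisfy $\frac kp+\frac{ps}2\le k$, and let $\widetilde{\mathcal C}=\{c\in\mathcal C: |\mathrm{vbl}(c)\cap\mathrm{vbl}(c^* )|\ge\frac kp+\frac{ps}2\}$. Then $|\widetilde{\mathcal C}|\le p$.
   Context: A $(k,d,s)$-CNF formula is a CNF formula in which every clause contains exactly $k$ distinct variables, every variable appears in at most $d$ clauses, and any two distinct clauses share at most $s$ variables. $\mathrm{vbl}(c)$ denotes the set of variables of clause $c$. *)

(* Defs.v *)
From HB Require Import structures.
From mathcomp Require Import all_boot all_order all_algebra.
Set Implicit Arguments. Unset Strict Implicit. Unset Printing Implicit Defensive.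
Import Order.TTheory GRing.Theory Num.Theory.

(* A literal over the variable set V is a pair (x, b): the variable x,
   positive if b = true and negated if b = false. *)
Definition literal (V : finType) := (V * bool)%type.
Definition clause (V : finType) := {set literal V}.

Definition vbl (V : finType) (c : clause V) : {set V} :=
  [set l.1 | l in c].

Definition kds_CNF (V : finType) (C : {set clause V}) (k d s : nat) : Prop :=
  [/\ (forall c, c \in C -> #|c| = k /\ #|vbl c| = k),
      (forall x : V, #|[set c in C | x \in vbl c]| <= d)%N &
      (forall c1 c2, c1 \in C -> c2 \in C -> c1 != c2 ->
         #|vbl c1 :&: vbl c2| <= s)%N].

(* Main.v *)
Require Import Defs.
From HB Require Import structures.
From mathcomp Require Import all_boot all_order all_algebra.
From mathcomp Require Import zify ring lra.
Import Order.TTheory GRing.Theory Num.Theory.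

Lemma cardU_le (T : finType) (X Y : {set T}) : (#|X :|: Y| <= #|X| + #|Y|)%N.
Proof. by rewrite cardsU leq_subr. Qed.

Lemma card_I_bigcup (T I : finType) (B : {set T}) (A : I -> {set T}) (l : seq I) :
  (#|B :&: \bigcup_(c <- l) A c| <= \sum_(c <- l) #|B :&: A c|)%N.
Proof.
elim: l => [|c l IH]; first by rewrite !big_nil setI0 cards0.
rewrite !big_cons setIUr (leq_trans (cardU_le _ _ _)) //.
by rewrite leq_add2l.
Qed.

Lemma bonf (V : finType) (C : {set clause V}) (k d s : nat) (B : {set V}) :
  kds_CNF C k d s -> forall l : seq (clause V), uniq l -> {subset l <= C} ->
  (\sum_(c <- l) #|vbl c :&: B| <=
     #|\bigcup_(c <- l) (vbl c :&: B)| + s * 'C(size l, 2))%N.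
Proof.
case=> _ _ Hs; elim=> [|c l IH] /=; first by rewrite !big_nil.
move=> /andP[cl ul] sub.
have IH' := IH ul (fun x xl => sub x (introT orP (or_intror xl))).
have cC : c \in C by apply: sub; rewrite inE eqxx.
rewrite !big_cons binS bin1.
have H1 : (#|(vbl c :&: B) :&: \bigcup_(c0 <- l) (vbl c0 :&: B)| <= size l * s)%N.
  apply: leq_trans (card_I_bigcup _ _ _ _ _) _.
  have : forall c', c' \in l -> (#|(vbl c :&: B) :&: (vbl c' :&: B)| <= s)%N.
    move=> c' c'l.
    have ne : c != c' by apply/eqP=> E; move: cl; rewrite E c'l.
    apply: leq_trans (Hs c c' cC (sub c' (introT orP (or_intror c'l))) ne).
    by apply: subset_leq_card; rewrite setIACA subsetIl.
  elim: (l) => [|c1 l1 IH1] H; first by rewrite big_nil.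
  rewrite big_cons /= mulSn leq_add //; first by apply: H; rewrite inE eqxx.
  by apply: IH1 => c' c'l; apply: H; rewrite inE c'l orbT.
have := cardsUI (vbl c :&: B) (\bigcup_(c0 <- l) (vbl c0 :&: B)).
lia.
Qed.

Lemma bin2_double m : ('C(m.+1, 2) * 2 = m.+1 * m)%N.
Proof. elim: m => // m IH; rewrite binS bin1 mulnDl IH; lia. Qed.

Lemma union_sub (V : finType) (B : {set V}) (l : seq (clause V)) :
  \bigcup_(c <- l) (vbl c :&: B) \subset B.
Proof.
elim/big_ind: _ => //; first exact: sub0set.
  by move=> X Y HX HY; rewrite subUset HX HY.
by move=> c _; apply: subsetIr.
Qed.

Local Open Scope ring_scope.

Lemma sum_lb (R : realFieldType) (T : eqType) (f : T -> nat) (t : R) (l : seq T) :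
  (forall c, c \in l -> t <= (f c)%:R) ->
  (size l)%:R * t <= \sum_(c <- l) (f c)%:R.
Proof.
elim: l => [|c l IH] H; first by rewrite big_nil mul0r.
rewrite big_cons /= -addn1 natrD mulrDl mul1r addrC lerD //.
  by apply: H; rewrite inE eqxx.
by apply: IH => c' c'l; apply: H; rewrite inE c'l orbT.
Qed.

Theorem corollary3p9 (R : realFieldType) (V : finType) (C : {set clause V})
    (k d s : nat) (cstar : clause V) (p : R) :
  kds_CNF C k d s ->
  #|vbl cstar|%N = k ->
  1 <= p ->
  k%:R / p + p * s%:R / 2 <= k%:R ->
  #|[set c in C | k%:R / p + p * s%:R / 2 <= #|vbl c :&: vbl cstar|%:R]|%:R
    <= p.
Proof.
move=> HC Hk Hp Ht.
set t := k%:R / p + p * s%:R / 2.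
set S := [set c in C | t <= #|vbl c :&: vbl cstar|%:R].
have [Hcl _ _] := HC.
have [k0|kpos] := eqVneq k 0%N.
  have sub : S \subset [set set0].
    apply/subsetP => c; rewrite !inE => /andP[cC _].
    have [H _] := Hcl c cC; apply/eqP/cards0_eq; by rewrite H k0.
  apply: le_trans Hp; rewrite -[1]/(1%:R) ler_nat.
  by apply: leq_trans (subset_leq_card sub) _; rewrite cards1.
rewrite leNgt; apply/negP => HN.
set N := #|S|.
have ubP : forall i, [pred i : nat | i%:R <= p] i -> (i <= N)%N.
  move=> i /= Hi; apply: ltnW; rewrite -(ltr_nat R); exact: le_lt_trans HN.
have exP : exists i, [pred i : nat | i%:R <= p] i by exists 0%N; rewrite /= (le_trans _ Hp) ?ler01.
case: (ex_maxnP exP ubP) => m /= Hm Hmax.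
have Hm1 : p < m.+1%:R.
  rewrite ltNge; apply/negP => H; have := Hmax _ H; lia.
have HmN : (m < N)%N by rewrite -(ltr_nat R); exact: le_lt_trans HN.
set l := take m.+1 (enum S).
have sizel : size l = m.+1 by rewrite size_takel // -cardE.
have ul : uniq l by apply: take_uniq; apply: enum_uniq.
have subl : {subset l <= C}.
  by move=> c /mem_take; rewrite mem_enum inE => /andP[].
have lb : forall c, c \in l -> t <= (#|vbl c :&: vbl cstar|)%:R.
  by move=> c /mem_take; rewrite mem_enum inE => /andP[].
have Hb := bonf _ _ _ _ _ (vbl cstar) HC l ul subl.
have Hu : (#|\bigcup_(c <- l) (vbl c :&: vbl cstar)| <= k)%N.
  by rewrite -Hk; apply: subset_leq_card; apply: union_sub.
have Hn : (\sum_(c <- l) #|vbl c :&: vbl cstar| <= k + s * 'C(m.+1, 2))%N.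
  by rewrite -sizel; apply: leq_trans Hb _; rewrite leq_add2r.
move: Hn; rewrite -(ler_nat R) natrD natrM natr_sum => Hn.
have Hl := sum_lb R _ (fun c => #|vbl c :&: vbl cstar|) t l lb.
rewrite sizel in Hl.
have H2 := bin2_double m.
move: H2 => /(congr1 (fun n => n%:R : R)); rewrite !natrM => H2.
have Hlt := le_trans Hl Hn.
move: Hlt H2 Hm Hm1; rewrite /t.
have kp : 1 <= k%:R :> R by rewrite -[1]/(1%:R) ler_nat lt0n.
have s0 : 0 <= s%:R :> R by apply: ler0n.
move: kp s0.
set K := k%:R; set Sx := s%:R; set X := 'C(m.+1, 2)%:R; set M := m%:R.
have eM : (m.+1)%:R = M + 1 :> R by rewrite /M -addn1 natrD.
rewrite eM.
move=> kp s0 H H2 Hm Hm1.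
have p0' : 0 < p by apply: lt_le_trans Hp; exact: ltr01.
have p0 : p != 0 by apply: lt0r_neq0.
have M0 : 0 <= M by apply: ler0n.
set q := K / p.
have qp : q * p = K by rewrite /q mulfVK.
have q0 : 0 < q by rewrite /q divr_gt0 // (lt_le_trans ltr01 kp).
have h1 : 0 < q * (M + 1 - p) by apply: mulr_gt0 => //; lra.
have h2 : 0 <= Sx * ((M + 1) * (p - M)) by apply: mulr_ge0 => //; apply: mulr_ge0; lra.
have e2 : X = (M + 1) * M / 2 by rewrite -H2 mulfK // pnatr_eq0.
rewrite e2 -/q in H.
have key : q * (M + 1 - p) + Sx * ((M + 1) * (p - M)) / 2 =
  (M + 1) * (q + p * Sx / 2) - (q * p + Sx * ((M + 1) * M / 2)) by ring.
rewrite qp in key.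
move: key H h1 h2; clear.
set A := q * (M + 1 - p); set B := Sx * ((M + 1) * (p - M));
set L := (M + 1) * (q + p * Sx / 2); set Q := Sx * ((M + 1) * M / 2).
move=> key H h1 h2; lra.
Qed.
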